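(* Let $H$ be a subgroup of $\operatorname{Sym}_n$ with $n\geq 3$ such that $H_2=H_{n-1}=\{\mathrm{id}\}$. Then for every $1\leq i\leq n$ there exist $1\leq j,j'\leq n$ such that $j\neq i$, $j'\neq i$, $x_ix_j\notin A$ and $x_{j'}x_i\notin\tilde A$.
   Context: $H_i=\{\sigma\in H\mid\sigma(i)=i\}$. $x_1,\dots,x_n$ are the free generators of the free monoid $\mathrm{FM}_n$. $A=\{x_{\sigma(n-1)}x_{\sigma(n)}\mid\sigma\in H\}$ and $\tilde A=\{x_{\sigma(1)}x_{\sigma(2)}\mid\sigma\in H\}$. *)

(* Defs.v *)
From mathcomp Require Import all_boot all_fingroup.
Set Implicit Arguments. Unset Strict Implicit. Unset Printing Implicit Defensive.
Local Open Scope group_scope.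

(* Indices 1..n of the paper are the ordinals 'I_n, shifted by one:
   paper index k corresponds to the ordinal with value k-1. *)

(* The free monoid FM_n on x_1..x_n: words = seq 'I_n, product = concatenation. *)
Definition FM (n : nat) := seq 'I_n.
Definition gen n (i : 'I_n) : FM n := [:: i].

Definition stab n (H : {group {perm 'I_n}}) (i : 'I_n) : {set {perm 'I_n}} :=
  [set s in H | s i == i].

(* w \in A = { x_{s(n-1)} x_{s(n)} | s \in H } *)
Definition inA n (H : {group {perm 'I_n}}) (w : FM n) : Prop :=
  exists2 s, s \in H & exists p q : 'I_n,
    [/\ val p = (n - 2)%N, val q = (n - 1)%N & w = gen (s p) ++ gen (s q)].

(* w \in Ã = { x_{s(1)} x_{s(2)} | s \in H } *)
Definition inAt n (H : {group {perm 'I_n}}) (w : FM n) : Prop :=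
  exists2 s, s \in H & exists p q : 'I_n,
    [/\ val p = 0%N, val q = 1%N & w = gen (s p) ++ gen (s q)].

(* Main.v *)
Require Import Defs.
From mathcomp Require Import all_boot all_fingroup.
From Stdlib Require Import Classical.
Local Open Scope group_scope.

Lemma avoid2 n (h : (3 <= n)%N) (i k : 'I_n) : exists j : 'I_n, j != i /\ j != k.
Proof.
have h1 : (#|[set i; k]| <= 2)%N.
  rewrite cards2; by case: (i != k).
have h2 : (0 < #|~: [set i; k]|)%N.
  rewrite lt0n; apply/negP => /eqP b0.
  have := cardsC [set i; k]; rewrite b0 addn0 card_ord => e.
  rewrite -e in h; by rewrite ltnNge h1 in h.
case/card_gt0P: h2 => j; rewrite in_setC !inE negb_or => /andP[a b].
by exists j.
Qed.

Lemma stab_uniq n (H : {group {perm 'I_n}}) (p : 'I_n) :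
  stab H p = [set 1] -> forall s t, s \in H -> t \in H -> s p = t p -> s = t.
Proof.
move=> hs s t sH tH e.
have : s * t^-1 \in stab H p.
  by rewrite /stab inE groupM ?groupV // permM e -permM mulgV perm1 eqxx.
rewrite hs inE => /eqP h; move: (congr1 (fun x => x * t) h).
by rewrite /= mulgKV mul1g.
Qed.

Theorem lemma4p3 (n : nat) (H : {group {perm 'I_n}}) :
  (3 <= n)%N ->
  (forall p : 'I_n, val p = 1%N -> stab H p = [set 1]) ->
  (forall p : 'I_n, val p = (n - 2)%N -> stab H p = [set 1]) ->
  forall i : 'I_n, exists j j' : 'I_n,
    [/\ j != i, j' != i, ~ inA H (gen i ++ gen j) & ~ inAt H (gen j' ++ gen i)].
Proof.
move=> hn h1 h2 i.
have [j [ji hj]] : exists j : 'I_n, j != i /\ ~ inA H (gen i ++ gen j).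
  case: (classic (exists s, exists p : 'I_n, [/\ s \in H, val p = (n-2)%N & s p = i])).
  - move=> [s [p [sH vp sp]]].
    have z1 : (n - 1 < n)%N by rewrite ltn_subrL andTb; apply: leq_trans hn.
    have [j [ji jk]] := @avoid2 _ hn i (s (Ordinal z1)).
    exists j; split => //.
    move=> [t tH [p' [q [vp' vq]]]]; rewrite /gen /= => [[e1 e2]].
    have pp : p' = p by apply: val_inj; rewrite vp vp'.
    subst p'.
    have ts : t = s by apply: (@stab_uniq _ _ _ (h2 p vp)) => //; rewrite -e1.
    subst t.
    have qq : q = Ordinal z1 by apply: val_inj.
    by subst q; move/eqP: jk; apply.
  - move=> nex.
    have [j [ji _]] := @avoid2 _ hn i i.
    exists j; split => //.
    move=> [t tH [p' [q [vp' vq]]]]; rewrite /gen /= => [[e1 e2]].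
    by apply: nex; exists t, p'; split.
have [j' [ji' hj']] : exists j : 'I_n, j != i /\ ~ inAt H (gen j ++ gen i).
  case: (classic (exists s, exists p : 'I_n, [/\ s \in H, val p = 1%N & s p = i])).
  - move=> [s [p [sH vp sp]]].
    have [k0 _] := @avoid2 _ hn i i.
    have z : (0 < n)%N by apply: leq_trans hn.
    have [j0 [ji0 jk]] := @avoid2 _ hn i (s (Ordinal z)).
    exists j0; split => //.
    move=> [t tH [p' [q [vp' vq]]]]; rewrite /gen /= => [[e1 e2]].
    have pp : q = p by apply: val_inj; rewrite vp vq.
    subst q.
    have ts : t = s by apply: (@stab_uniq _ _ _ (h1 p vp)) => //; rewrite -e2.
    subst t.
    have : p' = Ordinal z by apply: val_inj.
    move=> E; subst p'.
    by move/eqP: jk; apply.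
  - move=> nex.
    have [j0 [ji0 _]] := @avoid2 _ hn i i.
    exists j0; split => //.
    move=> [t tH [p' [q [vp' vq]]]]; rewrite /gen /= => [[e1 e2]].
    by apply: nex; exists t, q; split.
by exists j, j'; split.
Qed.
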